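(* Let $d\ge2$ and let $\mathcal{T}_d$ be the channel on a $d$-dimensional system given by $\mathcal{T}_d(\rho)=\mathrm{Tr}(\rho)|0\rangle\langle0|$. Then for $1/d^2\le t\le 1$, $$\mathcal{O}_t(\mathcal{T}_d)=\begin{cases}\frac1d & \text{if } \frac1d\le t\le1,\\ \frac{1}{d^2}\Big(1+\sqrt{(td^2-1)(d-1)}\Big) & \text{if } \frac1{d^2}\le t\le\frac1d.\end{cases}$$ An optimizer is $|0\rangle\langle0|_r\otimes\rho_a$ for any density operator $\rho_a$ with $\mathrm{Tr}(\rho_a^2)\le t$ when $1/d\le t\le1$, and $(1-k)\frac{I_{ra}}{d^2}+k\,|0\rangle\langle0|_r\otimes\frac{I_a}{d}$ with $k=\sqrt{\frac{td^2-1}{d-1}}$ when $1/d^2\le t\le 1/d$.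
   Context: For a channel $\mathcal{N}:\mathcal{L}(\mathcal{H}_a)\to\mathcal{L}(\mathcal{H}_b)$ with $\dim\mathcal{H}_a=\dim\mathcal{H}_b=\dim\mathcal{H}_r=d$, define $\mathcal{O}_t(\mathcal{N})=\max\{\langle\phi_{rb}|(\mathrm{id}_r\otimes\mathcal{N})(\rho_{ra})|\phi_{rb}\rangle:\ \rho_{ra}\succeq0,\ \mathrm{Tr}\rho_{ra}=1,\ \mathrm{Tr}(\rho_{ra}^2)\le t\}$, where $|\phi_{rb}\rangle=\frac{1}{\sqrt d}\sum_i|\alpha_i\rangle_r\otimes|\alpha_i\rangle_b$ is maximally entangled for an orthonormal basis $\{|\alpha_i\rangle\}$ with $|0\rangle$ one of its elements. *)

(* Defs.v *)
(* Complex scalars: an arbitrary numClosedFieldType C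
   (e.g. the complex numbers R[i] for R : realType, or algC). *)
From HB Require Import structures.
From mathcomp Require Import all_boot all_order all_algebra.
From mathcomp Require Import mxtens.
Set Implicit Arguments.
Unset Strict Implicit.
Unset Printing Implicit Defensive.
Import Order.TTheory GRing.Theory Num.Theory Num.Def.
Local Open Scope ring_scope.

Section QDefs.
Variable C : numClosedFieldType.

Definition dagger m n (A : 'M[C]_(m, n)) : 'M[C]_(n, m) := (map_mx Num.conj A)^T.

Definition psdmx n (A : 'M[C]_n) : Prop :=
  dagger A = A /\ forall v : 'cV[C]_n, 0 <= (dagger v *m A *m v) 0 0.

Definition density n (rho : 'M[C]_n) : Prop := psdmx rho /\ \tr rho = 1.

(* (id_r (x) N) acting on an operator on H_r (x) H_a, where the composite
   index of (i_r, i_a) is mxtens_index (i_r, i_a) (same convention as *t):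
   the (i,j) block rho_ij is mapped to N rho_ij. *)
Definition id_tens d (N : 'M[C]_d -> 'M[C]_d) (rho : 'M[C]_(d * d)) :
  'M[C]_(d * d) :=
  \matrix_(k, l)
    (N (\matrix_(a, b) rho (mxtens_index ((mxtens_unindex k).1, a))
                           (mxtens_index ((mxtens_unindex l).1, b))))
      (mxtens_unindex k).2 (mxtens_unindex l).2.

(* the maximally entangled vector built from the orthonormal basis given by
   the rows of a unitary matrix U: phi = 1/sqrt d sum_i alpha_i (x) alpha_i *)
Definition max_ent d (U : 'M[C]_d) : 'cV[C]_(d * d) :=
  (sqrtC (d%:R : C))^-1 *:
    \col_k (\sum_(i < d) U i (mxtens_unindex k).1 * U i (mxtens_unindex k).2).

Definition fidelity_obj d (N : 'M[C]_d -> 'M[C]_d) (U : 'M[C]_d)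
  (rho : 'M[C]_(d * d)) : C :=
  (dagger (max_ent U) *m id_tens N rho *m max_ent U) 0 0.

Definition feasible d (t : C) (rho : 'M[C]_(d * d)) : Prop :=
  density rho /\ \tr (rho *m rho) <= t.

Definition is_Ot d (N : 'M[C]_d -> 'M[C]_d) (U : 'M[C]_d) (t v : C) : Prop :=
  (exists rho, feasible t rho /\ fidelity_obj N U rho = v) /\
  (forall rho, feasible t rho -> fidelity_obj N U rho <= v).

Definition trace_replace d (i0 : 'I_d) (X : 'M[C]_d) : 'M[C]_d :=
  \tr X *: delta_mx i0 i0.

(* orthonormal basis {alpha_i} = rows of U, containing |0> = e_i0 *)
Definition onb_with d (U : 'M[C]_d) (i0 : 'I_d) : Prop :=
  U *m dagger U = 1%:M /\ exists j : 'I_d, row j U = delta_mx 0 i0.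

End QDefs.

(* Main.v *)
Require Import Defs.
From HB Require Import structures.
From mathcomp Require Import all_boot all_order all_algebra.
From mathcomp Require Import mxtens.
From mathcomp Require Import ring.
Import Order.TTheory GRing.Theory Num.Theory Num.Def.
Local Open Scope ring_scope.

Lemma sum_tens (R : nmodType) m n (F : 'I_(m*n) -> R) :
  \sum_k F k = \sum_(a < m) \sum_(b < n) F (mxtens_index (a, b)).
Proof.
rewrite pair_big /= (reindex (@mxtens_index m n)) /=; last first.
  by exists (@mxtens_unindex m n) => i _; rewrite (mxtens_indexK, mxtens_unindexK).
by apply: eq_bigr => -[a b].
Qed.

Lemma sum_pick (R : nmodType) n (i0 : 'I_n) (F : 'I_n -> R) :
  (forall b, b != i0 -> F b = 0) -> \sum_b F b = F i0.
Proof. by move=> H; rewrite (bigD1 i0) //= big1 ?addr0 // => b /H. Qed.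

Lemma daggerE (C : numClosedFieldType) m n (A : 'M[C]_(m, n)) i j :
  dagger A i j = (A j i)^*.
Proof. by rewrite /dagger !mxE. Qed.

Lemma quad_form (C : numClosedFieldType) n (A : 'M[C]_n) (v : 'cV[C]_n) :
  (dagger v *m A *m v) 0 0 = \sum_k \sum_l (v k 0)^* * A k l * v l 0.
Proof.
rewrite mxE exchange_big /=; apply: eq_bigr => l _.
rewrite mxE mulr_suml; apply: eq_bigr => k _.
by rewrite daggerE.
Qed.

Lemma psd_herm (C : numClosedFieldType) n (A : 'M[C]_n) i j :
  psdmx A -> A j i = (A i j)^*.
Proof. by case=> H _; rewrite -{1}H daggerE. Qed.

Lemma psd_diag (C : numClosedFieldType) n (A : 'M[C]_n) k :
  psdmx A -> 0 <= A k k.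
Proof.
case=> _ /(_ (delta_mx k 0)).
have -> : dagger (delta_mx k 0 : 'cV[C]_n) = delta_mx 0 k.
  by apply/matrixP => i j; rewrite daggerE !mxE conjC_nat andbC.
by rewrite -rowE -colE !mxE.
Qed.

Lemma tr_sq_ge (C : numClosedFieldType) n (A : 'M[C]_n) :
  psdmx A -> \sum_k A k k ^+ 2 <= \tr (A *m A).
Proof.
move=> hA; rewrite /mxtrace; apply: ler_sum => k _.
rewrite mxE (bigD1 k) //= expr2 -lerBlDl subrr.
apply: sumr_ge0 => l _; rewrite (@psd_herm _ _ _ k l hA); exact: mul_conjC_ge0.
Qed.
Lemma onb_col (C : numClosedFieldType) d (U : 'M[C]_d) i0 :
  onb_with U i0 -> exists j, (forall i, U i i0 = (i == j)%:R) /\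
     (forall k, U j k = (k == i0)%:R).
Proof.
case=> hU [j hj].
have hr : forall k, U j k = (k == i0)%:R.
  by move=> k; have := congr1 (fun M : 'rV[C]_d => M 0 k) hj; rewrite !mxE.
exists j; split => // i.
have := congr1 (fun M : 'M[C]_d => M j i) hU.
rewrite !mxE (@sum_pick _ _ i0); last first.
  by move=> k hk; rewrite hr (negbTE hk) mul0r.
rewrite hr eqxx mul1r daggerE => h.
by rewrite -[U i i0]conjCK h conjC_nat eq_sym.
Qed.

Lemma M_entry (C : numClosedFieldType) d (i0 : 'I_d) (rho : 'M[C]_(d * d)) a b a' b' :
  id_tens (trace_replace i0) rho (mxtens_index (a, b)) (mxtens_index (a', b')) =
  (if (b == i0) && (b' == i0) then
    \sum_c rho (mxtens_index (a, c)) (mxtens_index (a', c)) else 0).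
Proof.
rewrite /id_tens /trace_replace !mxE !mxtens_indexK /=.
case: ifP => _; last by rewrite mulr0.
by rewrite mulr1 /mxtrace; apply: eq_bigr => c _; rewrite mxE.
Qed.

Lemma obj_formula (C : numClosedFieldType) d (U : 'M[C]_d) i0 rho :
  onb_with U i0 ->
  fidelity_obj (trace_replace i0) U rho =
  (d%:R)^-1 * \sum_b rho (mxtens_index (i0, b)) (mxtens_index (i0, b)).
Proof.
move=> /onb_col [j [hj hr]].
set c : C := (sqrtC (d%:R : C))^-1.
have hphi : forall a, max_ent U (mxtens_index (a, i0)) 0 = c * (a == i0)%:R.
  move=> a; rewrite /max_ent !mxE mxtens_indexK /=.
  congr (_ * _); rewrite (@sum_pick _ _ j).
    by rewrite hj eqxx mulr1 hr.
  by move=> i hi; rewrite hj (negbTE hi) mulr0.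
have hc : c^* = c by rewrite geC0_conj // invr_ge0 sqrtC_ge0 ler0n.
have hcc : c * c = (d%:R)^-1 by rewrite -expr2 exprVn sqrtCK.
rewrite /fidelity_obj quad_form sum_tens (@sum_pick _ _ i0); last first.
  move=> a ha; apply: big1 => b _; apply: big1 => l _.
  case: (mxtens_indexP l) => a' b'.
  rewrite M_entry; case: eqP => [->|_] /=; last by rewrite mulr0 mul0r.
  by rewrite hphi (negbTE ha) mulr0 conjC0 !mul0r.
rewrite (@sum_pick _ _ i0); last first.
  by move=> b hb; apply: big1 => l _; case: (mxtens_indexP l) => a' b';
     rewrite M_entry (negbTE hb) /= mulr0 mul0r.
rewrite sum_tens (@sum_pick _ _ i0); last first.
  move=> a ha; apply: big1 => b _.
  rewrite M_entry eqxx /=; case: eqP => [->|_]; last by rewrite mulr0 mul0r.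
  by rewrite !hphi (negbTE ha) !mulr0.
rewrite (@sum_pick _ _ i0); last first.
  by move=> b hb; rewrite M_entry eqxx (negbTE hb) /= mulr0 mul0r.
rewrite M_entry eqxx /= !hphi eqxx !mulr1 hc mulrC mulrA [c * c]hcc.
by [].
Qed.
Lemma cauchy_sum (C : numClosedFieldType) (I : finType) (P : pred I) (x : I -> C) :
  (forall i, P i -> 0 <= x i) ->
  (\sum_(i | P i) x i) ^+ 2 <= (\sum_(i | P i) 1) * \sum_(i | P i) x i ^+ 2.
Proof.
move=> hx.
set S := \sum_(i | P i) x i; set n := \sum_(i | P i) (1 : C).
set Q := \sum_(i | P i) x i ^+ 2.
have H0 : 0 <= \sum_(i | P i) \sum_(j | P j) (x i - x j) ^+ 2.
  apply: sumr_ge0 => i Pi; apply: sumr_ge0 => j Pj.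
  by rewrite -realEsqr realB // ger0_real // hx.
have HE : \sum_(i | P i) \sum_(j | P j) (x i - x j) ^+ 2 = 2%:R * (n * Q - S ^+ 2).
  transitivity (\sum_(i | P i) (x i ^+ 2 * n + Q - 2%:R * x i * S)).
    apply: eq_bigr => i Pi.
    rewrite /n /Q /S mulr_sumr mulr_sumr -big_split -sumrB /=.
    by apply: eq_bigr => j Pj; ring.
  rewrite sumrB big_split /= -!mulr_suml -/S -/Q sumr_const.
  rewrite /n sumr_const -mulr_sumr -/S -[Q *+ _]mulr_natr; set k := _%:R; ring.
move: H0; rewrite HE pmulr_rge0 ?ltr0n // subr_ge0; exact.
Qed.

Lemma tr_tens (C : numClosedFieldType) m n (A : 'M[C]_m) (B : 'M[C]_n) :
  \tr (A *t B) = \tr A * \tr B.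
Proof.
rewrite /mxtrace sum_tens mulr_suml; apply: eq_bigr => a _.
by rewrite mulr_sumr; apply: eq_bigr => b _; rewrite tensmxE.
Qed.

Lemma diag_psd (C : numClosedFieldType) n (A : 'M[C]_n) :
  (forall k l, k != l -> A k l = 0) -> (forall k, 0 <= A k k) -> psdmx A.
Proof.
move=> h0 hd; split.
  apply/matrixP => k l; rewrite daggerE.
  case: (eqVneq k l) => [->|hkl]; first by rewrite geC0_conj.
  by rewrite h0 ?conjC0 ?h0 // eq_sym.
move=> v; rewrite quad_form; apply: sumr_ge0 => k _.
rewrite (@sum_pick _ _ k); last by move=> l hl; rewrite h0 ?mulr0 ?mul0r // eq_sym.
by rewrite -mulrA [A k k * _]mulrC mulrA mulr_ge0 // mulrC mul_conjC_ge0.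
Qed.

Lemma tens_psd (C : numClosedFieldType) d (i0 : 'I_d) (R : 'M[C]_d) :
  psdmx R -> psdmx (delta_mx i0 i0 *t R).
Proof.
move=> hR; split.
  apply/matrixP => k l.
  case: (mxtens_indexP k) => a b; case: (mxtens_indexP l) => a' b'.
  rewrite daggerE !tensmxE rmorphM /= -(@psd_herm _ _ _ b' b hR).
  by rewrite !mxE conjC_nat andbC.
move=> v; rewrite quad_form.
pose w : 'cV[C]_d := \col_b v (mxtens_index (i0, b)) 0.
have -> : \sum_k \sum_l (v k 0)^* * (delta_mx i0 i0 *t R) k l * v l 0
        = \sum_b \sum_b' (w b 0)^* * R b b' * w b' 0.
  rewrite sum_tens (@sum_pick _ _ i0); last first.
    move=> a ha; apply: big1 => b _; apply: big1 => l _.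
    case: (mxtens_indexP l) => a' b'.
    by rewrite tensmxE mxE (negbTE ha) /= mul0r mulr0 mul0r.
  apply: eq_bigr => b _; rewrite sum_tens (@sum_pick _ _ i0); last first.
    move=> a ha; apply: big1 => b' _.
    by rewrite tensmxE mxE (negbTE ha) andbF mul0r mulr0 mul0r.
  by apply: eq_bigr => b' _; rewrite tensmxE !mxE !eqxx mul1r.
by rewrite -quad_form; case: hR.
Qed.

Lemma tr_delta (C : numClosedFieldType) d (i0 : 'I_d) :
  \tr (delta_mx i0 i0 : 'M[C]_d) = 1.
Proof.
rewrite /mxtrace (@sum_pick _ _ i0) ?mxE ?eqxx // => b hb.
by rewrite mxE (negbTE hb).
Qed.

Lemma kron_ok (C : numClosedFieldType) d (i0 : 'I_d) (U : 'M[C]_d) t rho_a :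
  onb_with U i0 -> density rho_a -> \tr (rho_a *m rho_a) <= t ->
  feasible t (delta_mx i0 i0 *t rho_a) /\
  fidelity_obj (trace_replace i0) U (delta_mx i0 i0 *t rho_a) = (d%:R)^-1.
Proof.
move=> hU [hpsd htr] hpur; split; first split.
- split; first exact: tens_psd.
  by rewrite tr_tens tr_delta mul1r.
- by rewrite tensmx_mul mul_delta_mx tr_tens tr_delta mul1r.
rewrite obj_formula // -[RHS]mulr1 -htr; congr (_ * _).
by rewrite /mxtrace; apply: eq_bigr => b _; rewrite tensmxE mxE !eqxx mul1r.
Qed.

Lemma p_le1 (C : numClosedFieldType) d (i0 : 'I_d) (rho : 'M[C]_(d * d)) :
  density rho ->
  \sum_b rho (mxtens_index (i0, b)) (mxtens_index (i0, b)) +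
  \sum_(a | a != i0) \sum_b rho (mxtens_index (a, b)) (mxtens_index (a, b)) = 1.
Proof.
case=> _ <-; by rewrite /mxtrace sum_tens [RHS](bigD1 i0).
Qed.

Lemma upper1 (C : numClosedFieldType) d (i0 : 'I_d) (U : 'M[C]_d) t rho :
  onb_with U i0 -> feasible t rho ->
  fidelity_obj (trace_replace i0) U rho <= (d%:R)^-1.
Proof.
move=> hU [hden _]; rewrite obj_formula // -[X in _ <= X]mulr1.
apply: ler_wpM2l; first by rewrite invr_ge0 ler0n.
rewrite -(@p_le1 _ _ i0 _ hden) lerDl; apply: sumr_ge0 => a _; apply: sumr_ge0 => b _.
by apply: psd_diag; case: hden.
Qed.

Lemma maxmix_ok (C : numClosedFieldType) d t :
  (0 < d)%N -> (d%:R)^-1 <= t ->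
  density ((d%:R)^-1 *: (1%:M : 'M[C]_d)) /\
  \tr (((d%:R)^-1 *: (1%:M : 'M[C]_d)) *m ((d%:R)^-1 *: 1%:M)) <= t.
Proof.
move=> hd ht; have hd0 : (d%:R : C) != 0 by rewrite pnatr_eq0 -lt0n.
split; first split.
- apply: diag_psd => [k l hkl|k]; first by rewrite !mxE (negbTE hkl) mulr0.
  by rewrite !mxE eqxx mulr1 invr_ge0 ler0n.
- by rewrite scalemx1 mxtrace_scalar -(mulr_natr (d%:R^-1) d) mulVf.
rewrite -scalemxAl mul1mx scalerA scalemx1.
by rewrite mxtrace_scalar -(mulr_natr (_ * _) d) -mulrA mulVf // mulr1.
Qed.

Lemma sqrt_bound (C : numClosedFieldType) (y D : C) :
  y \is Num.real -> y ^+ 2 <= D -> y <= sqrtC D.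
Proof.
move=> hy hD; apply: le_trans (real_ler_norm hy) _.
rewrite normC_def conj_Creal // -expr2 ler_sqrtC //.
  by rewrite qualifE /= -realEsqr.
by rewrite qualifE /=; apply: le_trans hD; rewrite -realEsqr.
Qed.

Lemma upper2 (C : numClosedFieldType) d (i0 : 'I_d) (U : 'M[C]_d) t rho :
  (2 <= d)%N -> onb_with U i0 -> feasible t rho ->
  fidelity_obj (trace_replace i0) U rho <=
  (d%:R ^+ 2)^-1 * (1 + sqrtC ((t * d%:R ^+ 2 - 1) * (d%:R - 1))).
Proof.
move=> hd hU [hden hpur]; rewrite obj_formula //.
have hd0 : (d%:R : C) != 0 by rewrite pnatr_eq0; case: d hd {i0 U rho hU hden hpur}.
have hd1 : (0 : C) <= d%:R - 1.
  by rewrite subr_ge0 (ler_nat _ 1 d); apply: leq_trans hd.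
have hdp : (0 : C) <= d%:R by rewrite ler0n.
set x := fun a b => rho (mxtens_index (a, b)) (mxtens_index (a, b)).
have hx : forall a b, 0 <= x a b by move=> a b; apply: psd_diag; case: hden.
set p := \sum_b x i0 b.
set q := \sum_(a | a != i0) \sum_b x a b.
have hpq : p + q = 1 by exact: (@p_le1 _ _ i0 _ hden).
set A := \sum_b x i0 b ^+ 2.
set B := \sum_(a | a != i0) \sum_b x a b ^+ 2.
have hAB : A + B <= t.
  apply: le_trans hpur; rewrite (_ : A + B = \sum_k rho k k ^+ 2) ?tr_sq_ge //; first by case: hden.
  by rewrite sum_tens [RHS](bigD1 i0).
have hn : \sum_(b < d) (1 : C) = d%:R by rewrite sumr_const card_ord.
have hA : p ^+ 2 <= d%:R * A.
  rewrite -hn; exact: (@cauchy_sum _ _ predT (x i0)).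
have hn' : \sum_(a < d | a != i0) (1 : C) = d%:R - 1.
  rewrite -hn [in RHS](bigD1 i0) //=; ring.
have hB : q ^+ 2 <= (d%:R - 1) * (d%:R * B).
  apply: le_trans (@cauchy_sum _ _ (fun a => a != i0) (fun a => \sum_b x a b) _) _.
    by move=> a _; apply: sumr_ge0.
  rewrite hn'; apply: ler_wpM2l => //; rewrite /B mulr_sumr; apply: ler_sum => a _.
  rewrite -hn; exact: (@cauchy_sum _ _ predT (x a)).
have key : (d%:R * p - 1) ^+ 2 <= (t * d%:R ^+ 2 - 1) * (d%:R - 1).
  rewrite -subr_ge0.
  have -> : (t * d%:R ^+ 2 - 1) * (d%:R - 1) - (d%:R * p - 1) ^+ 2 =
     d%:R ^+ 2 * (d%:R - 1) * (t - (A + B)) + d%:R * (d%:R - 1) * (d%:R * A - p ^+ 2)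
     + d%:R * ((d%:R - 1) * (d%:R * B) - q ^+ 2).
    have -> : q = 1 - p by rewrite -hpq addrC addKr.
    ring.
  by rewrite !addr_ge0 // !mulr_ge0 ?subr_ge0 ?exprn_ge0 // -subr_ge0.
have hp : 0 <= p by apply: sumr_ge0.
have hre : d%:R * p - 1 \is Num.real by rewrite rpredB ?rpredM ?ger0_real.
have hs := @sqrt_bound _ _ _ hre key.
have -> : (d%:R)^-1 * p = (d%:R ^+ 2)^-1 * (d%:R * p) by field.
apply: ler_wpM2l; first by rewrite invr_ge0 exprn_ge0.
by rewrite -lerBlDl.
Qed.

Lemma sum_ind (C : numClosedFieldType) d (i0 : 'I_d) (x y : C) :
  \sum_(a < d) (x + y * (a == i0)%:R) = d%:R * x + y.
Proof.
rewrite big_split /= sumr_const card_ord mulr_natl; congr (_ + _).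
by rewrite (@sum_pick _ _ i0) ?eqxx ?mulr1 // => a ha; rewrite (negbTE ha) mulr0.
Qed.

Lemma rho_entry (C : numClosedFieldType) d (i0 : 'I_d) (k al be : C) K L :
  al = (1 - k) * (d%:R ^+ 2)^-1 -> be = k * (d%:R)^-1 ->
  ((1 - k) *: ((d%:R ^+ 2)^-1 *: (1%:M : 'M[C]_(d * d)))
   + k *: (delta_mx i0 i0 *t ((d%:R)^-1 *: (1%:M : 'M[C]_d)))) K L =
  (K == L)%:R * (al + be * ((mxtens_unindex K).1 == i0)%:R).
Proof.
move=> -> ->.
case: (mxtens_indexP K) => a b; case: (mxtens_indexP L) => a' b'.
rewrite !mxE !mxtens_indexK /= (inj_eq (can_inj (@mxtens_indexK d d))) xpair_eqE.
case: (eqVneq a a') => [e|ha]; [subst a'|]; case: (eqVneq b b') => [e|hb]; try subst b';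
  rewrite ?eqxx ?(negbTE ha) ?(negbTE hb) /= ?andbF ?andbT;
  case: (eqVneq a i0) => [e|hi]; try subst a; rewrite ?eqxx ?(negbTE hi) /=; try ring.
all: by rewrite [a' == i0]eq_sym (negbTE ha) !mulr0 !mul0r ?mulr0 ?addr0.
Qed.

Lemma sum_const_d (C : numClosedFieldType) d (c : C) : \sum_(b < d) c = d%:R * c.
Proof. by rewrite sumr_const card_ord mulr_natl. Qed.

Lemma rho2_ok (C : numClosedFieldType) d (i0 : 'I_d) (U : 'M[C]_d) t :
  (2 <= d)%N -> onb_with U i0 -> (d%:R ^+ 2)^-1 <= t -> t <= (d%:R)^-1 ->
  let k := sqrtC ((t * d%:R ^+ 2 - 1) / (d%:R - 1)) in
  let rho := (1 - k) *: ((d%:R ^+ 2)^-1 *: (1%:M : 'M[C]_(d * d)))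
              + k *: (delta_mx i0 i0 *t ((d%:R)^-1 *: (1%:M : 'M[C]_d))) in
  feasible t rho /\ fidelity_obj (trace_replace i0) U rho =
    (d%:R ^+ 2)^-1 * (1 + sqrtC ((t * d%:R ^+ 2 - 1) * (d%:R - 1))).
Proof.
move=> hd hU ht1 ht2 k rho.
have hd0 : (d%:R : C) != 0 by rewrite pnatr_eq0; case: d hd {i0 U hU ht1 ht2 k rho}.
have hdpos : (0 : C) < d%:R by rewrite ltr0n; case: d hd {i0 U hU ht1 ht2 k rho hd0}.
have hdm : (0 : C) < d%:R - 1.
  by rewrite subr_gt0 (ltr_nat _ 1 d).
have hdm0 : (d%:R - 1 : C) != 0 by rewrite gt_eqF.
set X := (t * d%:R ^+ 2 - 1) / (d%:R - 1).
have hX0 : 0 <= X.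
  apply: divr_ge0; last exact: ltW.
  rewrite subr_ge0; move: ht1; rewrite -[(d%:R ^+ 2)^-1]div1r ler_pdivrMr //.
  by rewrite exprn_gt0.
have hX1 : X <= 1.
  rewrite /X ler_pdivrMr // mul1r lerBlDr subrK.
  apply: le_trans (ler_wpM2r (exprn_ge0 2 (ltW hdpos)) ht2) _.
  by rewrite expr2 mulKf.
have hk0 : 0 <= k by rewrite sqrtC_ge0.
have hk1 : k <= 1 by rewrite -sqrtC1 ler_sqrtC // qualifE /= ler01.
have hk2 : k ^+ 2 = X by rewrite sqrtCK.
set al := (1 - k) * (d%:R ^+ 2)^-1.
set be := k * (d%:R)^-1.
have hal : 0 <= al by rewrite mulr_ge0 ?subr_ge0 // invr_ge0 exprn_ge0 // ltW.
have hbe : 0 <= be by rewrite mulr_ge0 // invr_ge0 ltW.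
have hent := @rho_entry C d i0 k al be _ _ erefl erefl.
rewrite -/rho in hent.
have hdiag : forall a b, rho (mxtens_index (a, b)) (mxtens_index (a, b)) =
   al + be * (a == i0)%:R.
  by move=> a b; rewrite hent eqxx mul1r mxtens_indexK.
split; first split; first split.
- apply: diag_psd => [K L hKL|K]; first by rewrite hent (negbTE hKL) mul0r.
  by rewrite hent eqxx mul1r addr_ge0 // mulr_ge0 // ler0n.
- rewrite /mxtrace sum_tens.
  under eq_bigr => a _ do under eq_bigr => b _ do rewrite hdiag.
  under eq_bigr => a _ do rewrite sum_const_d.
  rewrite -mulr_sumr sum_ind /al /be; field.
  by [].
- rewrite /mxtrace.
  have hsq : forall K, (rho *m rho) K K = rho K K ^+ 2.
    move=> K; rewrite mxE (@sum_pick _ _ K) ?expr2 // => L hL.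
    by rewrite hent eq_sym (negbTE hL) mul0r mul0r.
  under eq_bigr => K _ do rewrite hsq.
  rewrite sum_tens.
  have hf : forall a : 'I_d, (al + be * (a == i0)%:R) ^+ 2 =
      al ^+ 2 + (2%:R * al * be + be ^+ 2) * (a == i0)%:R.
    by move=> a; case: (a == i0); rewrite ?mulr1 ?mulr0; ring.
  under eq_bigr => a _ do under eq_bigr => b _ do rewrite hdiag hf.
  under eq_bigr => a _ do rewrite sum_const_d.
  rewrite -mulr_sumr sum_ind.
  have -> : d%:R * (d%:R * al ^+ 2 + (2%:R * al * be + be ^+ 2)) =
            (1 + k ^+ 2 * (d%:R - 1)) / d%:R ^+ 2.
    by rewrite /al /be; field.
  rewrite hk2 /X divfK // addrC subrK mulfK ?expf_neq0 //.
rewrite obj_formula //.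
under eq_bigr => b _ do rewrite hdiag eqxx mulr1.
rewrite sum_const_d.
have -> : (t * d%:R ^+ 2 - 1) * (d%:R - 1) = X * (d%:R - 1) ^+ 2.
  by rewrite /X; field.
rewrite sqrtCM ?qualifE /= ?exprn_ge0 ?(ltW hdm) // sqrCK ?(ltW hdm) // -/k.
rewrite /al /be; field.
by [].
Qed.

Theorem mainTheorem6 (C : numClosedFieldType) (d : nat) (hd : (2 <= d)%N)
  (i0 : 'I_d) (hi0 : nat_of_ord i0 = 0%N) (U : 'M[C]_d) (hU : onb_with U i0)
  (t : C) (ht1 : (d%:R ^+ 2)^-1 <= t) (ht2 : t <= 1) :
  let T := trace_replace i0 in
  ((d%:R)^-1 <= t ->
     is_Ot T U t (d%:R)^-1 /\
     (forall rho_a : 'M[C]_d, density rho_a -> \tr (rho_a *m rho_a) <= t ->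
        feasible t (delta_mx i0 i0 *t rho_a) /\
        fidelity_obj T U (delta_mx i0 i0 *t rho_a) = (d%:R)^-1)) /\
  (t <= (d%:R)^-1 ->
     let v := (d%:R ^+ 2)^-1 *
              (1 + sqrtC ((t * d%:R ^+ 2 - 1) * (d%:R - 1))) in
     let k := sqrtC ((t * d%:R ^+ 2 - 1) / (d%:R - 1)) in
     let rho := (1 - k) *: ((d%:R ^+ 2)^-1 *: (1%:M : 'M[C]_(d * d)))
                + k *: (delta_mx i0 i0 *t ((d%:R)^-1 *: (1%:M : 'M[C]_d))) in
     is_Ot T U t v /\ feasible t rho /\ fidelity_obj T U rho = v).
Proof.
move=> T; split.
- move=> ht; split.
  + split.
    * have hd1 : (0 < d)%N by apply: leq_trans hd.
      have [hden hp] := @maxmix_ok C d t hd1 ht.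
      have [hf ho] := @kron_ok C d i0 U t _ hU hden hp.
      by exists (delta_mx i0 i0 *t ((d%:R)^-1 *: (1%:M : 'M[C]_d))).
    * by move=> rho hr; apply: (@upper1 C d i0 U t rho hU hr).
  + by move=> rho_a hden hp; apply: (@kron_ok C d i0 U t rho_a hU hden hp).
- move=> ht v k rho.
  have [hf ho] := @rho2_ok C d i0 U t hd hU ht1 ht.
  split; last by split.
  split; first by exists rho.
  by move=> r hr; apply: (@upper2 C d i0 U t r hd hU hr).
Qed.
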